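(* Let $p\ge0$ be an integer and $0<x<2\pi$. Then $$\sum_{k=1}^\infty\frac{\cos(kx)}{(2k-1)(2k)^{2p}(2k+1)}=\frac12-\frac{\pi}{4}\sin\frac x2-\frac12\sum_{j=1}^p\frac{(-1)^{j+1}\pi^{2j}}{(2j)!}B_{2j}\Big(\frac{x}{2\pi}\Big),$$ $$\sum_{k=1}^\infty\frac{\sin(kx)}{(2k-1)(2k)^{2p+1}(2k+1)}=\frac{\pi}{4}\cos\frac x2-\frac14(\pi-x)-\frac12\sum_{j=1}^p\frac{(-1)^{j+1}\pi^{2j+1}}{(2j+1)!}B_{2j+1}\Big(\frac{x}{2\pi}\Big).$$
   Context: $B_n(y)$ are the Bernoulli polynomials, defined by $\frac{te^{yt}}{e^t-1}=\sum_{k\ge0}B_k(y)\frac{t^k}{k!}$. *)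

(* Defs.v *)
From Stdlib Require Import Reals.
From Coquelicot Require Import Coquelicot.
Open Scope R_scope.

Definition bernoulli_gf (y : R) (t : R) : R :=
  if Req_EM_T t 0 then 1 else t * exp (y * t) / (exp t - 1).

(* B_n(y) : the coefficient of t^n/n! in the Taylor expansion at 0 of the
   generating function, i.e. its n-th derivative at t = 0. *)
Definition Bernoulli (n : nat) (y : R) : R := Derive_n (bernoulli_gf y) n 0.

(* Main.v *)
Require Import Defs.
From Stdlib Require Import Reals Factorial Lra Lia.
From Coquelicot Require Import Coquelicot.
Open Scope R_scope.

Fixpoint gtab (n : nat) : nat -> R :=
  match n with
  | O => fun _ => 1
  | S m => fun k => if (k <=? m)%nat then gtab m k
                    else - sum_f_R0 (fun i => gtab m i / INR (fact (S (S m) - i))) m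
  end.

Definition gam (n : nat) : R := gtab n n.

Lemma gtab_stable : forall n k, (k <= n)%nat -> gtab n k = gam k.
Proof.
  induction n as [|n IH]; intros k Hk.
  - assert (k = 0%nat) by lia; subst; reflexivity.
  - destruct (Nat.leb_spec k n).
    + simpl. rewrite (proj2 (Nat.leb_le k n)) by lia. apply IH; lia.
    + assert (k = S n) by lia; subst. reflexivity.
Qed.

Lemma gam_rec : forall m,
  gam (S m) = - sum_f_R0 (fun i => gam i / INR (fact (S (S m) - i))) m.
Proof.
  intro m. unfold gam at 1. cbn [gtab].
  rewrite (proj2 (Nat.leb_gt (S m) m)) by lia. f_equal.
  apply sum_eq. intros i Hi. rewrite gtab_stable by lia. reflexivity.
Qed.

Lemma gam_0 : gam 0 = 1.
Proof. reflexivity. Qed.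

Definition e1 (n : nat) : R := / INR (fact (S n)).

Lemma PS_mult_gam_e1 : forall n, PS_mult gam e1 n = if Nat.eqb n 0 then 1 else 0.
Proof.
  intros [|m].
  - unfold PS_mult, e1. simpl. rewrite gam_0. field.
  - unfold PS_mult. rewrite tech5. rewrite Nat.sub_diag. unfold e1.
    rewrite gam_rec. simpl (Nat.eqb _ _).
    rewrite (sum_eq _ (fun i => gam i / INR (fact (S (S m) - i)))).
    + simpl (fact 1). simpl (INR 1). lra.
    + intros i Hi. unfold Rdiv. f_equal. f_equal. f_equal. f_equal. lia.
Qed.

Lemma INR_fact_ge1 : forall n, 1 <= INR (fact n).
Proof. intro n. apply (le_INR 1). apply lt_O_fact. Qed.

Lemma gam_bound : forall n, Rabs (gam n) <= 2 ^ n.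
Proof.
  intro n. induction n as [n IH] using (well_founded_induction Wf_nat.lt_wf). destruct n as [|m].
  - rewrite gam_0, Rabs_R1. simpl; lra.
  - rewrite gam_rec, Rabs_Ropp.
    eapply Rle_trans. apply sum_f_R0_triangle.
    apply Rle_trans with (sum_f_R0 (fun i => 2 ^ i) m).
    + apply sum_Rle. intros i Hi. unfold Rdiv. rewrite Rabs_mult.
      rewrite Rabs_inv. rewrite (Rabs_right (INR _)).
      2:{ apply Rle_ge, pos_INR. }
      assert (H1 := INR_fact_ge1 (S (S m) - i)).
      assert (H2 := IH i ltac:(lia)).
      assert (0 < / INR (fact (S (S m) - i)) <= 1).
      { split. apply Rinv_0_lt_compat; lra.
        rewrite <- Rinv_1. apply Rinv_le_contravar; lra. }
      assert (0 <= Rabs (gam i)) by apply Rabs_pos.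
      nra.
    + clear IH. induction m as [|m IHm].
      * simpl; lra.
      * rewrite tech5. simpl in *. lra.
Qed.

Lemma iser_R (a : nat -> R) (l l' : R) : is_series a l -> l = l' -> is_series a l'.
Proof. intros H <-; exact H. Qed.

Lemma radius_2pow : forall a : nat -> R, (forall n, Rabs (a n) <= 2 ^ n) ->
  Rbar_le (1/2) (CV_radius a).
Proof.
  intros a Ha. destruct (CV_radius_bounded a) as [Hub _].
  apply Hub. exists 1%R. intro n. rewrite Rabs_mult, <- RPow_abs.
  rewrite (Rabs_right (1/2)) by lra.
  apply Rle_trans with (2 ^ n * (1/2) ^ n).
  - apply Rmult_le_compat_r. apply pow_le; lra. apply Ha.
  - rewrite <- Rpow_mult_distr. replace (2 * (1/2)) with 1 by field. rewrite pow1. lra.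
Qed.

Lemma radius_of_ex : forall a x, ex_pseries a x -> Rbar_le (Rabs x) (CV_radius a).
Proof.
  intros a x H. apply Rbar_not_lt_le. intro Hlt.
  apply (CV_disk_outside a x Hlt).
  apply ex_series_lim_0 in H.
  eapply is_lim_seq_ext; [|exact H]. intro n. simpl. rewrite pow_n_pow.
  change (x ^ n * a n = a n * x ^ n). ring.
Qed.

Definition ey (y : R) (n : nat) : R := y ^ n / INR (fact n).

Lemma is_pseries_ey : forall y t, is_pseries (ey y) t (exp (y * t)).
Proof.
  intros y t. assert (H := is_exp_Reals (y * t)).
  unfold is_pseries in *. eapply is_series_ext; [|exact H].
  intro n. simpl. rewrite !pow_n_pow. unfold ey.
  change ((y * t) ^ n * / INR (fact n) = t ^ n * (y ^ n / INR (fact n))).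
  rewrite Rpow_mult_distr. unfold Rdiv. ring.
Qed.

Lemma is_pseries_e1 : forall t, t <> 0 -> is_pseries e1 t ((exp t - 1) / t).
Proof.
  intros t Ht. assert (H := is_exp_Reals t).
  unfold is_pseries in *.
  assert (H1 : is_series (fun k => scal (pow_n t (S k)) (/ INR (fact (S k)))) (exp t - 1)).
  { apply (is_series_incr_1 (fun k => scal (pow_n t k) (/ INR (fact k)))).
    match goal with |- is_series _ ?L => replace L with (exp t) end.
    exact H. change (exp t = exp t - 1 + 1 * / 1). field. }
  apply (is_series_scal (/ t)) in H1.
  eapply iser_R. eapply is_series_ext; [|exact H1].
  intro n. unfold e1. change (/ t * (pow_n t (S n) * / INR (fact (S n))) = pow_n t n * / INR (fact (S n))). rewrite !pow_n_pow.
  change (/ t * (t ^ S n * / INR (fact (S n))) = t ^ n * / INR (fact (S n))).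
  replace (t ^ S n) with (t * t ^ n) by reflexivity.
  field. split; [apply INR_fact_neq_0|auto].
  change (/ t * (exp t - 1) = (exp t - 1) / t). field. auto.
Qed.

Lemma iser_lim (a : nat -> R) (l : R) : is_lim_seq (sum_n a) l <-> is_series a l.
Proof. split; intro H; exact H. Qed.

Lemma ball_R (x : R) (e : posreal) (y : R) : ball x e y <-> Rabs (y - x) < e.
Proof. split; intro H; exact H. Qed.

Lemma R_gam : Rbar_le (1/2) (CV_radius gam).
Proof. apply radius_2pow, gam_bound. Qed.

Lemma R_e1 : Rbar_le 1 (CV_radius e1).
Proof.
  replace 1 with (Rabs 1) by (apply Rabs_R1).
  apply radius_of_ex. eexists. apply is_pseries_e1. lra.
Qed.

Lemma R_ey : forall y, Rbar_le 1 (CV_radius (ey y)).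
Proof.
  intro y. replace 1 with (Rabs 1) by (apply Rabs_R1).
  apply radius_of_ex. eexists. apply is_pseries_ey.
Qed.

Lemma lt_rad : forall t (r : Rbar) c, Rabs t < c -> Rbar_le c r -> Rbar_lt (Rabs t) r.
Proof. intros t r c H1 H2. eapply Rbar_lt_le_trans; [|exact H2]. exact H1. Qed.

Lemma PSeries_delta0 : forall t, PSeries (PS_mult gam e1) t = 1.
Proof.
  intro t. apply is_pseries_unique. unfold is_pseries.
  apply (proj1 (iser_lim _ _)). apply (is_lim_seq_ext (fun _ => 1)); [|apply is_lim_seq_const].
  intro n. symmetry. induction n as [|n IH].
  - rewrite sum_O. rewrite PS_mult_gam_e1. simpl. change (1 * 1 = 1). ring.
  - rewrite sum_Sn, IH. rewrite PS_mult_gam_e1. cbn [Nat.eqb].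
    change (1 + pow_n t (S n) * 0 = 1). ring.
Qed.

Lemma exp_ne1 : forall t, t <> 0 -> exp t - 1 <> 0.
Proof.
  intros t Ht E. apply Ht. apply exp_inv. rewrite exp_0. lra.
Qed.

Lemma Pgam : forall t, Rabs t < 1/2 -> t <> 0 -> PSeries gam t = t / (exp t - 1).
Proof.
  intros t Ht Ht0.
  assert (H := PSeries_mult gam e1 t (lt_rad _ _ _ Ht R_gam)
     (lt_rad _ _ _ (ltac:(lra) : Rabs t < 1) R_e1)).
  rewrite PSeries_delta0 in H.
  rewrite (is_pseries_unique _ _ _ (is_pseries_e1 t Ht0)) in H.
  assert (exp t - 1 <> 0) by (apply exp_ne1; auto).
  apply Rmult_eq_reg_r with ((exp t - 1) / t).
  - rewrite <- H. field. auto.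
  - unfold Rdiv. apply Rmult_integral_contrapositive_currified; auto.
    apply Rinv_neq_0_compat; auto.
Qed.

Definition cpol (y : R) := PS_mult gam (ey y).

Lemma gf_ps : forall y t, Rabs t < 1/2 -> bernoulli_gf y t = PSeries (cpol y) t.
Proof.
  intros y t Ht. unfold bernoulli_gf, cpol.
  destruct (Req_EM_T t 0) as [->|Ht0].
  - rewrite PSeries_0. unfold PS_mult, ey. simpl. rewrite gam_0. field.
  - rewrite PSeries_mult.
    + rewrite Pgam by auto. rewrite (is_pseries_unique _ _ _ (is_pseries_ey y t)).
      field. apply exp_ne1; auto.
    + apply (lt_rad _ _ _ Ht R_gam).
    + apply (lt_rad _ _ _ (ltac:(lra) : Rabs t < 1) (R_ey y)).
Qed.

Lemma cpol_rad : forall y, Rbar_lt 0 (CV_radius (cpol y)).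
Proof.
  intro y. apply Rbar_lt_le_trans with (Rabs (1/4)).
  - rewrite Rabs_right by lra. simpl. lra.
  - apply radius_of_ex. apply ex_pseries_mult.
    + apply (lt_rad _ _ (1/2)). rewrite Rabs_right; lra. apply R_gam.
    + apply (lt_rad _ _ 1). rewrite Rabs_right; lra. apply R_ey.
Qed.

Lemma Bern_eq : forall n y, Bernoulli n y = INR (fact n) * cpol y n.
Proof.
  intros n y. unfold Bernoulli.
  rewrite (Derive_n_ext_loc _ (PSeries (cpol y))).
  - rewrite Derive_n_coef by apply cpol_rad. ring.
  - exists (mkposreal (1/2) ltac:(lra)). intros t Ht. apply ball_R in Ht.
    simpl in Ht. apply gf_ps. replace t with (t - 0) by ring. exact Ht.
Qed.

Lemma is_derive_sum_f (f df : nat -> R -> R) n y :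
  (forall k, (k <= n)%nat -> is_derive (f k) y (df k y)) ->
  is_derive (fun y => sum_f_R0 (fun k => f k y) n) y (sum_f_R0 (fun k => df k y) n).
Proof.
  induction n as [|n IH]; intro H.
  - simpl. apply H. lia.
  - simpl. apply (is_derive_plus (fun y => sum_f_R0 (fun k => f k y) n) (f (S n))).
    + apply IH. intros; apply H; lia.
    + apply H; lia.
Qed.

Lemma ey_deriv : forall y m, is_derive (fun y => ey y (S m)) y (ey y m).
Proof.
  intros y m. unfold ey. auto_derive. auto.
  change (1 * (INR (S m) * y ^ m) * / INR (fact (S m)) = y ^ m / INR (fact m)).
  rewrite fact_simpl, mult_INR. field. split; [apply INR_fact_neq_0|].
  apply not_0_INR; lia.
Qed.

Lemma is_derive_eq (f : R -> R) x l l' : is_derive f x l -> l = l' -> is_derive f x l'.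
Proof. intros H <-; exact H. Qed.

Lemma cpol_deriv : forall n y, is_derive (fun y => cpol y (S n)) y (cpol y n).
Proof.
  intros n y. unfold cpol, PS_mult.
  apply is_derive_ext with (fun y => sum_f_R0 (fun k => gam k * ey y (S n - k)) n + gam (S n) * 1).
  { intro t. rewrite tech5. rewrite Nat.sub_diag. replace (ey t 0) with 1 by (unfold ey; simpl; field). reflexivity. }
  eapply is_derive_eq.
  - apply (is_derive_plus (fun y => sum_f_R0 (fun k => gam k * ey y (S n - k)) n)
           (fun y => gam (S n) * 1)).
    + apply (is_derive_sum_f (fun k y => gam k * ey y (S n - k)) (fun k y => gam k * ey y (n - k))).
      intros k Hk. apply is_derive_scal.
      replace (S n - k)%nat with (S (n - k)) by lia. apply ey_deriv.
    + apply is_derive_const.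
  - change (sum_f_R0 (fun k => gam k * ey y (n - k)) n + 0 = sum_f_R0 (fun k => gam k * ey y (n - k)) n).
    ring.
Qed.

Lemma Bern_deriv : forall n y, is_derive (Bernoulli (S n)) y (INR (S n) * Bernoulli n y).
Proof.
  intros n y.
  apply is_derive_ext with (fun y => INR (fact (S n)) * cpol y (S n)).
  { intro t. symmetry. apply Bern_eq. }
  eapply is_derive_eq. apply is_derive_scal. apply cpol_deriv.
  rewrite Bern_eq, fact_simpl, mult_INR. apply Rmult_assoc.
Qed.

Lemma Bern1 : forall y, Bernoulli 1 y = y - 1/2.
Proof.
  intro y. rewrite Bern_eq. unfold cpol, PS_mult, ey. simpl.
  rewrite gam_0. change (gam 1) with (gtab 1 1). simpl. field.
Qed.

Definition agam (n : nat) : R := (-1) ^ n * gam n.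
Definition bgam (n : nat) : R := gam n + (if Nat.eqb n 1 then 1 else 0).

Lemma gam_1 : gam 1 = - (1/2).
Proof. change (gam 1) with (gtab 1 1). simpl. field. Qed.

Lemma agam_bound : forall n, Rabs (agam n) <= 2 ^ n.
Proof. intro n. unfold agam. rewrite Rabs_mult, pow_1_abs, Rmult_1_l. apply gam_bound. Qed.

Lemma bgam_bound : forall n, Rabs (bgam n) <= 2 ^ n.
Proof.
  intro n. unfold bgam. destruct (Nat.eqb_spec n 1) as [->|Hn].
  - rewrite gam_1. simpl. rewrite Rabs_right; lra.
  - rewrite Rplus_0_r. apply gam_bound.
Qed.

Lemma Pagam : forall t, PSeries agam t = PSeries gam (- t).
Proof.
  intro t. unfold PSeries. apply Series_ext. intro n. unfold agam.
  replace (- t) with ((-1) * t) by ring. rewrite Rpow_mult_distr. ring.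
Qed.

Lemma is_series_delta1 : forall t, is_series (fun k => (if Nat.eqb k 1 then 1 else 0) * t ^ k) t.
Proof.
  intro t. apply (proj1 (iser_lim _ _)). apply is_lim_seq_incr_1.
  apply (is_lim_seq_ext (fun _ => t)); [|apply is_lim_seq_const].
  intro n. symmetry. induction n as [|n IH].
  - rewrite sum_Sn, sum_O. simpl. change (0 * 1 + 1 * (t * 1) = t). ring.
  - rewrite sum_Sn, IH. simpl. change (t + 0 * (t * t ^ S n) = t). ring.
Qed.

Lemma Pbgam : forall t, Rabs t < 1/2 -> PSeries bgam t = PSeries gam t + t.
Proof.
  intros t Ht. apply is_series_unique.
  eapply iser_R. eapply is_series_ext.
  2: apply (is_series_plus _ _ _ _ (Series_correct _ (CV_radius_inside gam t (lt_rad _ _ _ Ht R_gam)))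
            (is_series_delta1 t)).
  intro n. unfold bgam. change (pow_n t n * gam n + (if Nat.eqb n 1 then 1 else 0) * t ^ n =
     (gam n + (if Nat.eqb n 1 then 1 else 0)) * t ^ n). rewrite pow_n_pow. ring.
  change (Series (fun k => scal (pow_n t k) (gam k)) + t = PSeries gam t + t).
  f_equal. apply Series_ext. intro n. rewrite pow_n_pow. change (t ^ n * gam n = gam n * t ^ n). ring.
Qed.

Lemma gam_sym : forall t, Rabs t < 1/2 -> PSeries gam (- t) = PSeries gam t + t.
Proof.
  intros t Ht. destruct (Req_EM_T t 0) as [->|Ht0].
  - rewrite Ropp_0, PSeries_0. ring.
  - rewrite !Pgam; auto.
    + rewrite exp_Ropp. assert (E1 := exp_ne1 t Ht0). assert (E2 := exp_ne1 (-t) ltac:(lra)).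
      rewrite exp_Ropp in E2. assert (exp t > 0) by apply exp_pos.
      field. split; lra.
    + rewrite Rabs_Ropp; auto.
    + lra.
Qed.

Lemma gam_odd : forall j, gam (2 * j + 3) = 0.
Proof.
  intro j.
  assert (H : Derive_n (PSeries agam) (2 * j + 3) 0 = Derive_n (PSeries bgam) (2 * j + 3) 0).
  { apply Derive_n_ext_loc. exists (mkposreal (1/2) ltac:(lra)). intros t Ht.
    apply ball_R in Ht. simpl in Ht. assert (Ht2 : Rabs t < 1/2) by (replace t with (t - 0) by (simpl; ring); exact Ht).
    change (PSeries agam t = PSeries bgam t). rewrite Pagam, Pbgam, gam_sym; auto. }
  rewrite !Derive_n_coef in H.
  2,3: apply Rbar_lt_le_trans with (1/2); [simpl; lra| apply radius_2pow].
  2: apply bgam_bound. 2: apply agam_bound.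
  apply Rmult_eq_reg_r in H. 2: apply INR_fact_neq_0.
  unfold agam, bgam in H. replace (2 * j + 3)%nat with (S (2 * (S j))) in H by lia.
  rewrite pow_1_odd in H. simpl Nat.eqb in H.
  replace (2 * j + 3)%nat with (S (2 * (S j))) by lia. lra.
Qed.

Lemma cpol0 : forall n, cpol 0 n = gam n.
Proof.
  intros [|m].
  - unfold cpol, PS_mult, ey. simpl. field.
  - unfold cpol, PS_mult. rewrite tech5, Nat.sub_diag.
    rewrite sum_eq_R0.
    + unfold ey. simpl. field.
    + intros k Hk. unfold ey. rewrite pow_i by lia. unfold Rdiv. ring.
Qed.

Lemma cpol1 : forall m, (1 <= m)%nat -> cpol 1 (S m) = gam (S m).
Proof.
  intros m Hm. unfold cpol, PS_mult. rewrite tech5, Nat.sub_diag.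
  assert (H := PS_mult_gam_e1 m).
  destruct m as [|m']; [lia|]. simpl Nat.eqb in H. unfold PS_mult in H.
  rewrite (sum_eq _ (fun k => gam k * e1 (S m' - k))).
  - rewrite H. unfold ey. simpl. field.
  - intros k Hk. unfold ey, e1. rewrite pow1. replace (S (S m') - k)%nat with (S (S m' - k)) by lia.
    unfold Rdiv. ring.
Qed.

Lemma Bern_odd_ends : forall j, (1 <= j)%nat ->
  Bernoulli (2 * j + 1) 0 = 0 /\ Bernoulli (2 * j + 1) 1 = 0.
Proof.
  intros j Hj. destruct j as [|i]; [lia|].
  replace (2 * S i + 1)%nat with (2 * i + 3)%nat by lia.
  rewrite !Bern_eq. split.
  - rewrite cpol0, gam_odd. ring.
  - replace (2 * i + 3)%nat with (S (2 * i + 2)) by lia. rewrite cpol1 by lia.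
    replace (S (2 * i + 2)) with (2 * i + 3)%nat by lia. rewrite gam_odd. ring.
Qed.

Definition aF (j : nat) : R := (-1) ^ (j + 1) * PI ^ (2 * j) / INR (fact (2 * j)).
Definition aG (j : nat) : R := (-1) ^ (j + 1) * PI ^ (2 * j + 1) / INR (fact (2 * j + 1)).

Definition Fp (p : nat) (x : R) : R :=
  1 / 2 - PI / 4 * sin (x / 2)
     - 1 / 2 * sum_n_m (fun j : nat =>
          (-1) ^ (j + 1) * PI ^ (2 * j) / INR (fact (2 * j))
          * Bernoulli (2 * j) (x / (2 * PI))) 1 p.

Definition Gp (p : nat) (x : R) : R :=
  PI / 4 * cos (x / 2) - 1 / 4 * (PI - x)
     - 1 / 2 * sum_n_m (fun j : nat =>
          (-1) ^ (j + 1) * PI ^ (2 * j + 1) / INR (fact (2 * j + 1))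
          * Bernoulli (2 * j + 1) (x / (2 * PI))) 1 p.

Lemma is_derive_cst (c x : R) : is_derive (fun _ => c) x 0.
Proof. apply is_derive_Reals. apply derivable_pt_lim_const. Qed.

Lemma is_derive_snm (f df : nat -> R -> R) p x :
  (forall j, (1 <= j)%nat -> is_derive (f j) x (df j x)) ->
  is_derive (fun x => sum_n_m (fun j => f j x) 1 p) x (sum_n_m (fun j => df j x) 1 p).
Proof.
  intro H. induction p as [|p IH].
  - apply is_derive_ext with (fun _ => 0).
    { intro t. rewrite sum_n_m_zero by lia. reflexivity. }
    rewrite sum_n_m_zero by lia. apply is_derive_cst.
  - apply is_derive_ext with (fun x => sum_n_m (fun j => f j x) 1 p + f (S p) x).
    { intro t. rewrite sum_n_Sm by lia. reflexivity. }
    rewrite sum_n_Sm by lia.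
    apply (is_derive_plus (fun x => sum_n_m (fun j => f j x) 1 p) (f (S p))).
    + exact IH.
    + apply H. lia.
Qed.

Lemma PI_ne0 : PI <> 0.
Proof. apply PI_neq0. Qed.

Lemma Bern_comp_deriv : forall n x,
  is_derive (fun x => Bernoulli (S n) (x / (2 * PI))) x
    (/ (2 * PI) * (INR (S n) * Bernoulli n (x / (2 * PI)))).
Proof.
  intros n x.
  apply (is_derive_comp (Bernoulli (S n)) (fun x => x / (2 * PI))).
  - apply Bern_deriv.
  - auto_derive. auto. field. apply PI_ne0.
Qed.

Lemma snm_shift (g : nat -> R) p : sum_n_m g 1 (S p) = g 1%nat + sum_n_m (fun i => g (S i)) 1 p.
Proof.
  rewrite (sum_n_m_Chasles g 1 1 (S p)) by lia. rewrite sum_n_n.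
  rewrite sum_n_m_S. reflexivity.
Qed.

Lemma snm_scal (c : R) (g : nat -> R) n m : sum_n_m (fun k => c * g k) n m = c * sum_n_m g n m.
Proof. apply (sum_n_m_mult_l c g n m). Qed.

Lemma isd_plus (f g : R -> R) x df dg : is_derive f x df -> is_derive g x dg ->
  is_derive (fun x => f x + g x) x (df + dg).
Proof. intros H1 H2. exact (is_derive_plus f g x df dg H1 H2). Qed.

Lemma isd_minus (f g : R -> R) x df dg : is_derive f x df -> is_derive g x dg ->
  is_derive (fun x => f x - g x) x (df - dg).
Proof. intros H1 H2. exact (is_derive_minus f g x df dg H1 H2). Qed.

Lemma fact_S_INR : forall n, INR (fact (S n)) = INR (S n) * INR (fact n).
Proof. intro n. rewrite fact_simpl, mult_INR. reflexivity. Qed.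

Lemma dG : forall p x, is_derive (Gp p) x (Fp p x / 2).
Proof.
  intros p x. unfold Gp.
  eapply is_derive_eq.
  - apply isd_minus.
    + apply (isd_minus (fun x => PI / 4 * cos (x / 2)) (fun x => 1/4 * (PI - x))).
      * auto_derive. auto. reflexivity.
      * auto_derive. auto. reflexivity.
    + apply is_derive_scal.
      apply (is_derive_snm
        (fun j x => (-1) ^ (j + 1) * PI ^ (2 * j + 1) / INR (fact (2 * j + 1)) * Bernoulli (2 * j + 1) (x / (2 * PI)))
        (fun j x => (-1) ^ (j + 1) * PI ^ (2 * j + 1) / INR (fact (2 * j + 1)) *
            (/ (2 * PI) * (INR (S (2 * j)) * Bernoulli (2 * j) (x / (2 * PI)))))).
      intros j Hj. apply is_derive_scal.
      replace (2 * j + 1)%nat with (S (2 * j)) by lia. apply Bern_comp_deriv.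
  - unfold Fp.
    rewrite (sum_n_m_ext_loc _ (fun j => / 2 * ((-1) ^ (j + 1) * PI ^ (2 * j) / INR (fact (2 * j))
          * Bernoulli (2 * j) (x / (2 * PI))))).
    + rewrite snm_scal. match goal with |- ?a = ?b => change (@eq R a b) end.
      replace (x * / 2) with (x / 2) by reflexivity.
      set (S := sum_n_m _ 1 p). field.
    + intros j Hj. replace (2 * j + 1)%nat with (S (2 * j)) by lia.
      rewrite fact_S_INR. replace (PI ^ S (2 * j)) with (PI * PI ^ (2 * j)) by reflexivity.
      assert (INR (S (2 * j)) <> 0) by (apply not_0_INR; lia).
      assert (INR (fact (2 * j)) <> 0) by apply INR_fact_neq_0.
      assert (PI <> 0) by apply PI_ne0.
      match goal with |- ?a = ?b => change (@eq R a b) end.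
      field. auto.
Qed.

Lemma Bern_comp_deriv' : forall m c x, (1 <= m)%nat ->
  is_derive (fun x => c * Bernoulli m (x / (2 * PI))) x
    (c * (/ (2 * PI) * (INR m * Bernoulli (m - 1) (x / (2 * PI))))).
Proof.
  intros m c x Hm. destruct m as [|m']; [lia|].
  replace (S m' - 1)%nat with m' by lia. apply is_derive_scal, Bern_comp_deriv.
Qed.

Lemma dF : forall p x, is_derive (Fp (S p)) x (- Gp p x / 2).
Proof.
  intros p x. unfold Fp.
  eapply is_derive_eq.
  - apply isd_minus.
    + apply (isd_minus (fun x => 1 / 2) (fun x => PI / 4 * sin (x / 2))).
      * apply is_derive_cst.
      * auto_derive. auto. reflexivity.
    + apply is_derive_scal.
      apply (is_derive_snm
        (fun j x => (-1) ^ (j + 1) * PI ^ (2 * j) / INR (fact (2 * j)) * Bernoulli (2 * j) (x / (2 * PI)))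
        (fun j x => (-1) ^ (j + 1) * PI ^ (2 * j) / INR (fact (2 * j)) *
            (/ (2 * PI) * (INR (2 * j) * Bernoulli (2 * j - 1) (x / (2 * PI)))))).
      intros j Hj. apply Bern_comp_deriv'. lia.
  - rewrite snm_shift.
    rewrite (sum_n_m_ext_loc _ (fun i => - / 2 * ((-1) ^ (i + 1) * PI ^ (2 * i + 1) / INR (fact (2 * i + 1))
          * Bernoulli (2 * i + 1) (x / (2 * PI))))).
    + rewrite snm_scal. unfold Gp. simpl (2 * 1)%nat. simpl (2 - 1)%nat. rewrite Bern1.
      match goal with |- ?a = ?b => change (@eq R a b) end.
      replace (x * / 2) with (x / 2) by reflexivity.
      set (S := sum_n_m _ 1 p).
      assert (PI <> 0) by apply PI_ne0.
      simpl. field. auto.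
    + intros i Hi.
      replace (2 * S i - 1)%nat with (2 * i + 1)%nat by lia.
      replace (2 * S i)%nat with (S (S (2 * i))) by lia.
      replace (2 * i + 1)%nat with (S (2 * i)) by lia.
      rewrite !fact_S_INR.
      replace (S i + 1)%nat with (S (i + 1)) by lia.
      replace ((-1) ^ S (i + 1)) with (-1 * (-1) ^ (i + 1)) by reflexivity.
      replace (PI ^ S (S (2 * i))) with (PI * (PI * PI ^ (2 * i))) by reflexivity.
      replace (PI ^ S (2 * i)) with (PI * PI ^ (2 * i)) by reflexivity.
      assert (INR (S (2 * i)) <> 0) by (apply not_0_INR; lia).
      assert (INR (S (S (2 * i))) <> 0) by (apply not_0_INR; lia).
      assert (INR (fact (2 * i)) <> 0) by apply INR_fact_neq_0.
      assert (PI <> 0) by apply PI_ne0.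
      match goal with |- ?a = ?b => change (@eq R a b) end.
      field. auto.
Qed.

Lemma abs_sin_le : forall u, Rabs (sin u) <= Rabs u.
Proof.
  assert (Hp : forall u, 0 < u -> Rabs (sin u) <= u).
  { intros u Hu. assert (H1 := sin_lt_x u Hu). assert (H2 := SIN_bound u).
    apply Rabs_le. split; [|lra].
    destruct (Rle_lt_dec 1 u). lra.
    assert (0 <= sin u) by (apply sin_ge_0; assert (H3 := PI2_3_2); lra). lra. }
  intro u. destruct (Rtotal_order u 0) as [H|[H|H]].
  - rewrite <- Rabs_Ropp, <- sin_neg, (Rabs_left u) by lra. apply Hp; lra.
  - subst. rewrite sin_0, Rabs_R0. lra.
  - rewrite (Rabs_right u) by lra. apply Hp; lra.
Qed.

Definition kk (n : nat) : R := INR (S n).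

Lemma kk_ge1 : forall n, 1 <= kk n.
Proof. intro n. unfold kk. rewrite S_INR. assert (H := pos_INR n). lra. Qed.

Definition cterm (p : nat) (x : R) (n : nat) : R :=
  cos (kk n * x) / ((2 * kk n - 1) * (2 * kk n) ^ (2 * p) * (2 * kk n + 1)).
Definition sterm (p : nat) (x : R) (n : nat) : R :=
  sin (kk n * x) / ((2 * kk n - 1) * (2 * kk n) ^ (2 * p + 1) * (2 * kk n + 1)).
Definition Mt (n : nat) : R := / ((2 * kk n - 1) * (2 * kk n + 1)).

Lemma Mt_pos : forall n, 0 < Mt n.
Proof. intro n. unfold Mt. assert (H := kk_ge1 n). apply Rinv_0_lt_compat. nra. Qed.

Lemma sum_Mt : forall n, sum_n Mt n = 1/2 * (1 - / (2 * kk n + 1)).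
Proof.
  induction n as [|n IH].
  - rewrite sum_O. unfold Mt, kk. simpl. field.
  - rewrite sum_Sn, IH. change (1 / 2 * (1 - / (2 * kk n + 1)) + Mt (S n) = 1 / 2 * (1 - / (2 * kk (S n) + 1))).
    unfold Mt. assert (kk (S n) = kk n + 1) by (unfold kk; rewrite (S_INR (S n)); reflexivity).
    rewrite H. assert (H1 := kk_ge1 n). field. lra.
Qed.

Lemma lim_inv_kk : is_lim_seq (fun n => / (2 * kk n + 1)) 0.
Proof.
  assert (H : is_lim_seq (fun n => 2 * kk n + 1) p_infty).
  { assert (H0 := is_lim_seq_INR). apply is_lim_seq_incr_1 in H0.
    eapply is_lim_seq_le_p_loc. 2: exact H0.
    exists O. intros n _. unfold kk. assert (H1 := pos_INR (S n)). lra. }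
  replace (Finite 0) with (Rbar_inv p_infty) by reflexivity.
  apply is_lim_seq_inv. exact H. discriminate.
Qed.

Lemma Mt_series : is_series Mt (1/2).
Proof.
  apply (proj1 (iser_lim _ _)).
  apply (is_lim_seq_ext (fun n => 1/2 * (1 - / (2 * kk n + 1)))).
  { intro n. symmetry. apply sum_Mt. }
  replace (Finite (1/2)) with (Rbar_mult (1/2) (1 - 0)) by (simpl; f_equal; ring).
  apply is_lim_seq_scal_l. apply is_lim_seq_minus'. apply is_lim_seq_const. apply lim_inv_kk.
Qed.

Lemma den_ge : forall n q, (2 * kk n - 1) * (2 * kk n + 1) <= (2 * kk n - 1) * (2 * kk n) ^ q * (2 * kk n + 1).
Proof.
  intros n q. assert (H := kk_ge1 n).
  assert (1 <= (2 * kk n) ^ q) by (apply pow_R1_Rle; lra).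
  assert (0 < (2 * kk n - 1) * (2 * kk n + 1)) by nra. nra.
Qed.

Lemma term_bound : forall n q u, Rabs u <= 1 ->
  Rabs (u / ((2 * kk n - 1) * (2 * kk n) ^ q * (2 * kk n + 1))) <= Mt n.
Proof.
  intros n q u Hu. assert (H := kk_ge1 n). assert (H2 := den_ge n q).
  assert (0 < (2 * kk n - 1) * (2 * kk n + 1)) by nra.
  unfold Rdiv. rewrite Rabs_mult, Rabs_inv, (Rabs_right (_ * _ ^ q * _)) by lra.
  unfold Mt. apply Rle_trans with (1 * / ((2 * kk n - 1) * (2 * kk n) ^ q * (2 * kk n + 1))).
  - apply Rmult_le_compat_r; [|lra]. apply Rlt_le, Rinv_0_lt_compat. lra.
  - rewrite Rmult_1_l. apply Rinv_le_contravar; lra.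
Qed.

Lemma cterm_bound : forall p x n, Rabs (cterm p x n) <= Mt n.
Proof. intros. apply term_bound. apply Rabs_le, COS_bound. Qed.

Lemma sterm_bound : forall p x n, Rabs (sterm p x n) <= Mt n.
Proof. intros. apply term_bound. apply Rabs_le, SIN_bound. Qed.

Lemma sterm_bound_lin : forall p x a n, Rabs (sin (kk n * x)) <= kk n * Rabs (x - a) ->
  Rabs (sterm p x n) <= Rabs (x - a) / 2 * Mt n.
Proof.
  intros p x a n Hs. unfold sterm. assert (H := kk_ge1 n).
  replace (2 * p + 1)%nat with (S (2 * p)) by lia.
  replace ((2 * kk n) ^ S (2 * p)) with (2 * kk n * (2 * kk n) ^ (2 * p)) by reflexivity.
  assert (H2 := den_ge n (2 * p)).
  assert (0 < (2 * kk n - 1) * (2 * kk n + 1)) by nra.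
  assert (0 < (2 * kk n - 1) * (2 * kk n) ^ (2 * p) * (2 * kk n + 1)) by lra.
  unfold Rdiv. rewrite Rabs_mult, Rabs_inv.
  rewrite (Rabs_right (_ * (_ * _) * _)).
  2: { apply Rle_ge. replace ((2 * kk n - 1) * (2 * kk n * (2 * kk n) ^ (2 * p)) * (2 * kk n + 1))
       with (2 * kk n * ((2 * kk n - 1) * (2 * kk n) ^ (2 * p) * (2 * kk n + 1))) by ring. nra. }
  unfold Mt.
  replace ((2 * kk n - 1) * (2 * kk n * (2 * kk n) ^ (2 * p)) * (2 * kk n + 1))
    with (2 * kk n * ((2 * kk n - 1) * (2 * kk n) ^ (2 * p) * (2 * kk n + 1))) by ring.
  rewrite Rinv_mult.
  apply Rle_trans with (kk n * Rabs (x - a) * (/ (2 * kk n) * / ((2 * kk n - 1) * (2 * kk n + 1)))).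
  - apply Rmult_le_compat; try apply Rabs_pos; auto.
    + apply Rmult_le_pos; apply Rlt_le, Rinv_0_lt_compat; lra.
    + apply Rmult_le_compat_l. apply Rlt_le, Rinv_0_lt_compat; lra.
      apply Rinv_le_contravar; lra.
  - right. field. lra.
Qed.

Lemma abs_sin_k0 : forall n x, Rabs (sin (kk n * x)) <= kk n * Rabs (x - 0).
Proof.
  intros n x. rewrite Rminus_0_r. eapply Rle_trans. apply abs_sin_le.
  rewrite Rabs_mult, (Rabs_right (kk n)). lra. assert (H := kk_ge1 n). lra.
Qed.

Lemma sin_kk_2PI : forall n x, sin (kk n * x) = sin (kk n * (x - 2 * PI)).
Proof.
  intros n x. rewrite <- (sin_period (kk n * (x - 2 * PI)) (S n)). f_equal. unfold kk. ring.
Qed.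

Lemma abs_sin_k2 : forall n x, Rabs (sin (kk n * x)) <= kk n * Rabs (x - 2 * PI).
Proof.
  intros n x. rewrite sin_kk_2PI. eapply Rle_trans. apply abs_sin_le.
  rewrite Rabs_mult, (Rabs_right (kk n)). lra. assert (H := kk_ge1 n). lra.
Qed.

Lemma cos_kk_2PI : forall n x, cos (kk n * x) = cos (kk n * (x - 2 * PI)).
Proof.
  intros n x. rewrite <- (cos_period (kk n * (x - 2 * PI)) (S n)). f_equal. unfold kk. ring.
Qed.

Lemma sum_abs_le (a b : nat -> R) : (forall n, Rabs (a n) <= b n) ->
  forall N, Rabs (sum_n a N) <= sum_n b N.
Proof.
  intros H N. induction N as [|N IH].
  - rewrite !sum_O. apply H.
  - rewrite !sum_Sn. change (Rabs (sum_n a N + a (S N)) <= sum_n b N + b (S N)).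
    eapply Rle_trans. apply Rabs_triang. specialize (H (S N)). lra.
Qed.

Lemma series_abs_le (a b : nat -> R) l L : is_series a l -> is_series b L ->
  (forall n, Rabs (a n) <= b n) -> Rabs l <= L.
Proof.
  intros Ha Hb H.
  apply (proj2 (iser_lim _ _)) in Ha. apply (proj2 (iser_lim _ _)) in Hb.
  apply is_lim_seq_abs in Ha.
  assert (Hle := is_lim_seq_le _ _ _ _ (sum_abs_le a b H) Ha Hb). exact Hle.
Qed.

Lemma Rsub_add (u v : R) : u = u - v + v.
Proof. ring. Qed.

Lemma tail_le (a b : nat -> R) l L N : is_series a l -> is_series b L ->
  (forall n, Rabs (a n) <= b n) -> Rabs (l - sum_n a N) <= L - sum_n b N.
Proof.
  intros Ha Hb H.
  apply (series_abs_le (fun k => a (S N + k)%nat) (fun k => b (S N + k)%nat)).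
  - apply (is_series_incr_n a (S N)). lia. simpl pred.
    eapply iser_R. exact Ha. apply Rsub_add.
  - apply (is_series_incr_n b (S N)). lia. simpl pred.
    eapply iser_R. exact Hb. apply Rsub_add.
  - intro n. apply H.
Qed.

Lemma tail_lim (b : nat -> R) L : is_series b L -> is_lim_seq (fun N => L - sum_n b N) 0.
Proof.
  intro Hb. apply (proj2 (iser_lim _ _)) in Hb.
  replace (Finite 0) with (Finite (L - L)) by (f_equal; ring).
  apply is_lim_seq_minus'. apply is_lim_seq_const. exact Hb.
Qed.

Lemma isd_cont (f : R -> R) (x l : R) : is_derive f x l -> continuity_pt f x.
Proof.
  intro H. apply is_derive_Reals in H. apply derivable_continuous_pt. exists l. exact H.
Qed.

Lemma lim_unique_R (u : nat -> R) (a b : R) : is_lim_seq u a -> is_lim_seq u b -> a = b.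
Proof.
  intros Ha Hb. apply is_lim_seq_unique in Ha. apply is_lim_seq_unique in Hb.
  rewrite Ha in Hb. injection Hb. auto.
Qed.

Lemma approx_const (f : R -> R) (fn dn : nat -> R -> R) (T : nat -> R) (K a b : R) :
  (forall n t, a < t < b -> is_derive (fn n) t (dn n t)) ->
  (forall n t, a < t < b -> Rabs (dn n t - K) <= T n) ->
  is_lim_seq T 0 ->
  (forall t, a < t < b -> is_lim_seq (fun n => fn n t) (f t)) ->
  forall x y, a < x < b -> a < y < b -> f x - f y = K * (x - y).
Proof.
  intros Hd Hb HT Hl x y Hx Hy.
  assert (Hn : forall n, Rabs (fn n x - fn n y - K * (x - y)) <= T n * Rabs (x - y)).
  { intro n. destruct (MVT_gen (fn n) y x (dn n)) as [c [Hc E]].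
    - intros t Ht. apply Hd. split.
      + apply Rle_lt_trans with (Rmin y x). apply Rmin_glb; lra. lra.
      + apply Rlt_le_trans with (Rmax y x). lra. apply Rmax_lub; lra.
    - intros t Ht. apply (isd_cont _ _ (dn n t)). apply Hd. split.
      + apply Rlt_le_trans with (Rmin y x). apply Rmin_glb_lt; lra. lra.
      + apply Rle_lt_trans with (Rmax y x). lra. apply Rmax_lub_lt; lra.
    - rewrite E. replace (dn n c * (x - y) - K * (x - y)) with ((dn n c - K) * (x - y)) by ring.
      rewrite Rabs_mult. apply Rmult_le_compat_r. apply Rabs_pos. apply Hb. split.
      + apply Rlt_le_trans with (Rmin y x). apply Rmin_glb_lt; lra. lra.
      + apply Rle_lt_trans with (Rmax y x). lra. apply Rmax_lub_lt; lra. }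
  assert (L1 : is_lim_seq (fun n => fn n x - fn n y - K * (x - y)) (f x - f y - K * (x - y))).
  { apply is_lim_seq_minus'. apply is_lim_seq_minus'; auto. apply is_lim_seq_const. }
  assert (L2 : is_lim_seq (fun n => fn n x - fn n y - K * (x - y)) 0).
  { apply is_lim_seq_le_le with (fun n => - (T n * Rabs (x - y))) (fun n => T n * Rabs (x - y)).
    - intro n. specialize (Hn n). assert (H1 := Rle_abs (fn n x - fn n y - K * (x - y))). assert (H2 := Rle_abs (- (fn n x - fn n y - K * (x - y)))). rewrite Rabs_Ropp in H2. lra.
    - replace (Finite 0) with (Finite (- (0 * Rabs (x - y)))) by (f_equal; ring).
      apply (is_lim_seq_opp _ (Finite (0 * Rabs (x - y)))). apply is_lim_seq_mult'. exact HT. apply is_lim_seq_const.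
    - replace (Finite 0) with (Finite (0 * Rabs (x - y))) by (f_equal; ring).
      apply is_lim_seq_mult'. exact HT. apply is_lim_seq_const. }
  assert (E := lim_unique_R _ _ _ L1 L2). lra.
Qed.

Lemma sum_n_scal (c : R) (a : nat -> R) N : sum_n (fun k => c * a k) N = c * sum_n a N.
Proof.
  induction N as [|N IH].
  - rewrite !sum_O. reflexivity.
  - rewrite !sum_Sn, IH. change (c * sum_n a N + c * a (S N) = c * (sum_n a N + a (S N))). ring.
Qed.

Lemma is_derive_sum_n (f df : nat -> R -> R) N x :
  (forall k, is_derive (f k) x (df k x)) ->
  is_derive (fun x => sum_n (fun k => f k x) N) x (sum_n (fun k => df k x) N).
Proof.
  intro H. induction N as [|N IH].
  - apply is_derive_ext with (f 0%nat). intro t. rewrite sum_O. reflexivity.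
    rewrite sum_O. apply H.
  - apply is_derive_ext with (fun x => sum_n (fun k => f k x) N + f (S N) x).
    { intro t. rewrite sum_Sn. reflexivity. }
    rewrite sum_Sn. apply (isd_plus (fun x => sum_n (fun k => f k x) N) (f (S N))); auto.
Qed.

Lemma dterm_s : forall p n t, is_derive (fun t => sterm p t n) t (1/2 * cterm p t n).
Proof.
  intros p n t. unfold sterm, cterm. assert (H := kk_ge1 n).
  assert (H2 := den_ge n (2 * p)).
  assert (0 < (2 * kk n - 1) * (2 * kk n + 1)) by nra.
  assert (0 < (2 * kk n) ^ (2 * p)) by (apply pow_lt; lra).
  replace (2 * p + 1)%nat with (S (2 * p)) by lia.
  replace ((2 * kk n) ^ S (2 * p)) with (2 * kk n * (2 * kk n) ^ (2 * p)) by reflexivity.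
  set (P := (2 * kk n) ^ (2 * p)) in *. clearbody P.
  set (k := kk n) in *. clearbody k.
  auto_derive.
  - exact I.
  - field. repeat split; try lra; nra.
Qed.

Lemma dterm_c : forall p n t, is_derive (fun t => cterm (S p) t n) t (-1/2 * sterm p t n).
Proof.
  intros p n t. unfold sterm, cterm. assert (H := kk_ge1 n).
  assert (H2 := den_ge n (2 * p + 1)).
  assert (0 < (2 * kk n - 1) * (2 * kk n + 1)) by nra.
  assert (0 < (2 * kk n) ^ (2 * p + 1)) by (apply pow_lt; lra).
  replace (2 * S p)%nat with (S (2 * p + 1)) by lia.
  replace ((2 * kk n) ^ S (2 * p + 1)) with (2 * kk n * (2 * kk n) ^ (2 * p + 1)) by reflexivity.
  set (P := (2 * kk n) ^ (2 * p + 1)) in *. clearbody P.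
  set (k := kk n) in *. clearbody k.
  auto_derive.
  - exact I.
  - field. repeat split; try lra; nra.
Qed.

Lemma dS : forall p N t, is_derive (fun t => sum_n (sterm p t) N) t (1/2 * sum_n (cterm p t) N).
Proof.
  intros p N t. rewrite <- sum_n_scal.
  apply (is_derive_sum_n (fun k t => sterm p t k) (fun k t => 1/2 * cterm p t k)).
  intro k. apply dterm_s.
Qed.

Lemma dC : forall p N t, is_derive (fun t => sum_n (cterm (S p) t) N) t (-1/2 * sum_n (sterm p t) N).
Proof.
  intros p N t. rewrite <- sum_n_scal.
  apply (is_derive_sum_n (fun k t => cterm (S p) t k) (fun k t => -1/2 * sterm p t k)).
  intro k. apply dterm_c.
Qed.

Lemma ex_cterm : forall p x, ex_series (cterm p x).
Proof. intros p x. apply (ex_series_le (K := R_AbsRing) (V := R_CompleteNormedModule) _ Mt). intro n. apply cterm_bound. exists (1/2). apply Mt_series. Qed.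

Lemma ex_sterm : forall p x, ex_series (sterm p x).
Proof. intros p x. apply (ex_series_le (K := R_AbsRing) (V := R_CompleteNormedModule) _ Mt). intro n. apply sterm_bound. exists (1/2). apply Mt_series. Qed.

Lemma Mt_scal (c : R) : is_series (fun n => c * Mt n) (c / 2).
Proof.
  assert (H := is_series_scal c _ _ Mt_series). eapply iser_R.
  eapply is_series_ext; [|exact H]. intro n. reflexivity.
  change (c * (1/2) = c / 2). field.
Qed.

Lemma S_small : forall p a y, (forall n, Rabs (sin (kk n * y)) <= kk n * Rabs (y - a)) ->
  Rabs (Series (sterm p y)) <= Rabs (y - a) / 4.
Proof.
  intros p a y Hs.
  replace (Rabs (y - a) / 4) with (Rabs (y - a) / 2 / 2) by field.
  apply (series_abs_le (sterm p y) (fun n => Rabs (y - a) / 2 * Mt n)).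
  - apply Series_correct, ex_sterm.
  - apply Mt_scal.
  - intro n. apply sterm_bound_lin. apply Hs.
Qed.

Lemma small_all : forall x, (forall e, 0 < e -> Rabs x < e) -> x = 0.
Proof.
  intros x H. destruct (Req_dec x 0) as [|Hx]; auto.
  assert (Habs : 0 < Rabs x) by (apply Rabs_pos_lt; auto).
  specialize (H _ Habs). lra.
Qed.

Lemma D_small (S G : R -> R) a : (forall y, Rabs (S y) <= Rabs (y - a) / 4) ->
  continuity_pt G a -> G a = 0 ->
  forall e, 0 < e -> exists d, 0 < d /\ forall y, Rabs (y - a) < d -> Rabs (S y - G y) < e.
Proof.
  intros HS HG Ha e He.
  unfold continuity_pt, continue_in, limit1_in, limit_in in HG.
  destruct (HG (e / 2)) as [al [Hal Hal2]]. lra.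
  exists (Rmin al e). split. apply Rmin_pos; lra.
  intros y Hy.
  assert (Hy1 : Rabs (y - a) < al) by (eapply Rlt_le_trans; [exact Hy| apply Rmin_l]).
  assert (Hy2 : Rabs (y - a) < e) by (eapply Rlt_le_trans; [exact Hy| apply Rmin_r]).
  assert (H1 : Rabs (G y - G a) < e / 2).
  { destruct (Req_dec y a) as [->|Hne].
    - rewrite Rminus_diag, Rabs_R0. lra.
    - apply (Hal2 y). split. unfold D_x, no_cond. split; auto. exact Hy1. }
  rewrite Ha, Rminus_0_r in H1. specialize (HS y).
  eapply Rle_lt_trans. apply Rabs_triang. rewrite Rabs_Ropp. lra.
Qed.

Lemma Gp0 : forall p, Gp p 0 = 0.
Proof.
  intro p. unfold Gp.
  rewrite (sum_n_m_ext_loc _ (fun j => 0 * 0)).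
  - rewrite snm_scal. rewrite Rdiv_0_l, cos_0. rewrite Rmult_0_l. match goal with |- ?a = ?b => change (@eq R a b) end. field.
  - intros j Hj. replace (0 / (2 * PI)) with 0 by (field; apply PI_ne0).
    rewrite (proj1 (Bern_odd_ends j ltac:(lia))). match goal with |- ?a = ?b => change (@eq R a b) end. ring.
Qed.

Lemma Gp2PI : forall p, Gp p (2 * PI) = 0.
Proof.
  intro p. unfold Gp.
  rewrite (sum_n_m_ext_loc _ (fun j => 0 * 0)).
  - rewrite snm_scal. replace (2 * PI / 2) with PI by field. rewrite cos_PI. rewrite Rmult_0_l. match goal with |- ?a = ?b => change (@eq R a b) end. field.
  - intros j Hj. replace (2 * PI / (2 * PI)) with 1 by (field; apply PI_ne0).
    rewrite (proj2 (Bern_odd_ends j ltac:(lia))). match goal with |- ?a = ?b => change (@eq R a b) end. ring.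
Qed.

Lemma Gp_cont : forall p a, continuity_pt (Gp p) a.
Proof. intros p a. apply (isd_cont _ _ _ (dG p a)). Qed.

Lemma T_lim : is_lim_seq (fun n => 1/2 * (1/2 - sum_n Mt n)) 0.
Proof.
  replace (Finite 0) with (Rbar_mult (1/2) 0) by (simpl; f_equal; ring).
  apply is_lim_seq_scal_l. apply tail_lim. apply Mt_series.
Qed.

Lemma psum_lim (a : nat -> R) (g : R) : ex_series a ->
  is_lim_seq (fun n => sum_n a n - g) (Series a - g).
Proof.
  intro H. apply is_lim_seq_minus'. apply (proj2 (iser_lim _ _)). apply Series_correct, H.
  apply is_lim_seq_const.
Qed.

Lemma near0_point : forall (D : R -> R) e, 0 < e ->
  (exists d, 0 < d /\ forall y, Rabs (y - 0) < d -> Rabs (D y) < e) ->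
  exists y, 0 < y <= PI / 2 /\ Rabs (D y) < e.
Proof.
  intros D e He [d [Hd H]]. assert (HP := PI_RGT_0).
  exists (Rmin (d / 2) (PI / 2)). split.
  - split. apply Rmin_pos; lra. apply Rmin_r.
  - apply H. rewrite Rminus_0_r, Rabs_right.
    + eapply Rle_lt_trans. apply Rmin_l. lra.
    + apply Rle_ge, Rlt_le, Rmin_pos; lra.
Qed.

Lemma near2PI_point : forall (D : R -> R) e, 0 < e ->
  (exists d, 0 < d /\ forall y, Rabs (y - 2 * PI) < d -> Rabs (D y) < e) ->
  exists y, 3 * PI / 2 <= y < 2 * PI /\ Rabs (D y) < e.
Proof.
  intros D e He [d [Hd H]]. assert (HP := PI_RGT_0).
  assert (Hm : 0 < Rmin (d / 2) (PI / 2)) by (apply Rmin_pos; lra).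
  assert (Hm2 : Rmin (d / 2) (PI / 2) <= PI / 2) by apply Rmin_r.
  assert (Hm3 : Rmin (d / 2) (PI / 2) <= d / 2) by apply Rmin_l.
  exists (2 * PI - Rmin (d / 2) (PI / 2)). split.
  - lra.
  - apply H. replace (2 * PI - Rmin (d / 2) (PI / 2) - 2 * PI) with (- Rmin (d / 2) (PI / 2)) by ring.
    rewrite Rabs_Ropp, Rabs_right; lra.
Qed.

Lemma S_step : forall p, (forall x, 0 < x < 2 * PI -> is_series (cterm p x) (Fp p x)) ->
  forall x, 0 < x < 2 * PI -> is_series (sterm p x) (Gp p x).
Proof.
  intros p HC x Hx.
  set (Sf := fun t => Series (sterm p t)).
  assert (Hc : forall u v, 0 < u < 2 * PI -> 0 < v < 2 * PI ->
     (Sf u - Gp p u) - (Sf v - Gp p v) = 0 * (u - v)).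
  { apply (approx_const (fun t => Sf t - Gp p t) (fun n t => sum_n (sterm p t) n - Gp p t)
      (fun n t => 1/2 * sum_n (cterm p t) n - Fp p t / 2) (fun n => 1/2 * (1/2 - sum_n Mt n))).
    - intros n t Ht. apply isd_minus. apply dS. apply dG.
    - intros n t Ht. rewrite Rminus_0_r.
      replace (1 / 2 * sum_n (cterm p t) n - Fp p t / 2) with (- (1/2) * (Fp p t - sum_n (cterm p t) n)) by field.
      rewrite Rabs_mult, Rabs_Ropp, (Rabs_right (1/2)) by lra.
      apply Rmult_le_compat_l. lra. apply tail_le. apply HC; auto. apply Mt_series. apply cterm_bound.
    - apply T_lim.
    - intros t Ht. apply psum_lim. apply ex_sterm. }
  assert (HD : Sf x - Gp p x = 0).
  { apply small_all. intros e He.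
    destruct (near0_point (fun t => Sf t - Gp p t) e He) as [y [Hy Hye]].
    { apply (D_small Sf (Gp p) 0). intro t. apply S_small. intro n. apply abs_sin_k0. apply Gp_cont. apply Gp0. exact He. }
    assert (Hy2 : 0 < y < 2 * PI) by (assert (H := PI_RGT_0); lra).
    specialize (Hc x y Hx Hy2). replace (Sf x - Gp p x) with (Sf y - Gp p y) by lra. exact Hye. }
  eapply iser_R. apply Series_correct, ex_sterm. unfold Sf in HD. lra.
Qed.

Lemma C_step : forall p, (forall x, 0 < x < 2 * PI -> is_series (sterm p x) (Gp p x)) ->
  forall x, 0 < x < 2 * PI -> is_series (cterm (S p) x) (Fp (S p) x).
Proof.
  intros p HS x Hx. assert (HP := PI_RGT_0).
  set (Cf := fun t => Series (cterm (S p) t)).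
  assert (Hc : forall u v, 0 < u < 2 * PI -> 0 < v < 2 * PI ->
     (Cf u - Fp (S p) u) - (Cf v - Fp (S p) v) = 0 * (u - v)).
  { apply (approx_const (fun t => Cf t - Fp (S p) t) (fun n t => sum_n (cterm (S p) t) n - Fp (S p) t)
      (fun n t => -1/2 * sum_n (sterm p t) n - (- Gp p t / 2)) (fun n => 1/2 * (1/2 - sum_n Mt n))).
    - intros n t Ht. apply isd_minus. apply dC. apply dF.
    - intros n t Ht. rewrite Rminus_0_r.
      replace (-1 / 2 * sum_n (sterm p t) n - - Gp p t / 2) with ((1/2) * (Gp p t - sum_n (sterm p t) n)) by field.
      rewrite Rabs_mult, (Rabs_right (1/2)) by lra.
      apply Rmult_le_compat_l. lra. apply tail_le. apply HS; auto. apply Mt_series. apply sterm_bound.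
    - apply T_lim.
    - intros t Ht. apply psum_lim. apply ex_cterm. }
  set (c := Cf PI - Fp (S p) PI).
  assert (Hcc : forall t, 0 < t < 2 * PI -> Cf t = Fp (S p) t + c).
  { intros t Ht. specialize (Hc t PI Ht ltac:(lra)). unfold c. lra. }
  set (Sf := fun t => Series (sterm (S p) t)).
  assert (Hs : forall u v, 0 < u < 2 * PI -> 0 < v < 2 * PI ->
     (Sf u - Gp (S p) u) - (Sf v - Gp (S p) v) = c / 2 * (u - v)).
  { apply (approx_const (fun t => Sf t - Gp (S p) t) (fun n t => sum_n (sterm (S p) t) n - Gp (S p) t)
      (fun n t => 1/2 * sum_n (cterm (S p) t) n - Fp (S p) t / 2) (fun n => 1/2 * (1/2 - sum_n Mt n))).
    - intros n t Ht. apply isd_minus. apply dS. apply dG.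
    - intros n t Ht.
      replace (1 / 2 * sum_n (cterm (S p) t) n - Fp (S p) t / 2 - c / 2)
        with (- (1/2) * ((Fp (S p) t + c) - sum_n (cterm (S p) t) n)) by field.
      rewrite <- (Hcc t Ht).
      rewrite Rabs_mult, Rabs_Ropp, (Rabs_right (1/2)) by lra.
      apply Rmult_le_compat_l. lra. apply tail_le. apply Series_correct, ex_cterm. apply Mt_series. apply cterm_bound.
    - apply T_lim.
    - intros t Ht. apply psum_lim. apply ex_sterm. }
  assert (Hc0 : c = 0).
  { apply small_all. intros e He.
    destruct (near0_point (fun t => Sf t - Gp (S p) t) (e * PI / 4)) as [y [Hy Hye]].
    { apply Rmult_lt_0_compat; [|lra]. apply Rmult_lt_0_compat; lra. }
    { apply (D_small Sf (Gp (S p)) 0). intro t. apply S_small. intro n. apply abs_sin_k0.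
      apply Gp_cont. apply Gp0. apply Rmult_lt_0_compat; [|lra]. apply Rmult_lt_0_compat; lra. }
    destruct (near2PI_point (fun t => Sf t - Gp (S p) t) (e * PI / 4)) as [z [Hz Hze]].
    { apply Rmult_lt_0_compat; [|lra]. apply Rmult_lt_0_compat; lra. }
    { apply (D_small Sf (Gp (S p)) (2 * PI)). intro t. apply S_small. intro n. apply abs_sin_k2.
      apply Gp_cont. apply Gp2PI. apply Rmult_lt_0_compat; [|lra]. apply Rmult_lt_0_compat; lra. }
    specialize (Hs z y ltac:(lra) ltac:(lra)).
    assert (Hzy : PI <= z - y) by lra.
    assert (H1 : Rabs (c / 2 * (z - y)) < e * PI / 2).
    { rewrite <- Hs. eapply Rle_lt_trans. apply Rabs_triang. rewrite Rabs_Ropp. lra. }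
    rewrite Rabs_mult, (Rabs_right (z - y)) in H1 by lra.
    unfold Rdiv in H1. rewrite Rabs_mult, (Rabs_right (/ 2)) in H1 by lra.
    assert (0 <= Rabs c) by apply Rabs_pos.
    destruct (Rlt_le_dec (Rabs c) e) as [|Hge]; auto.
    exfalso. assert (e * / 2 * PI <= Rabs c * / 2 * (z - y)).
    { apply Rmult_le_compat; try lra. }
    lra. }
  eapply iser_R. apply Series_correct, ex_cterm. fold (Cf x). rewrite Hcc by auto. rewrite Hc0. ring.
Qed.


Lemma isd_mult (f g : R -> R) x df dg : is_derive f x df -> is_derive g x dg ->
  is_derive (fun x => f x * g x) x (df * g x + f x * dg).
Proof.
  intros H1 H2. eapply is_derive_eq. apply (is_derive_mult f g x df dg H1 H2).
  intros; apply Rmult_comm. reflexivity.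
Qed.

Lemma sc1 : forall a, sin a ^ 2 + cos a ^ 2 = 1.
Proof. intro a. rewrite <- (sin2_cos2 a). unfold Rsqr. ring. Qed.

Lemma cot_deriv : forall t, sin (t / 2) <> 0 ->
  is_derive (fun t => cos (t / 2) / sin (t / 2)) t (- (1/2) / sin (t / 2) ^ 2).
Proof.
  intros t Ht. auto_derive. auto.
  assert (H := sc1 (t / 2)).
  replace (t * / 2) with (t / 2) by reflexivity.
  field_simplify; auto. 
  replace (cos (t / 2) ^ 2) with (1 - sin (t / 2) ^ 2) by lra. field. auto.
Qed.

Lemma sin_half_ge : forall x c, 0 < x < 2 * PI -> Rmin PI x <= c <= Rmax PI x ->
  sin (x / 2) <= sin (c / 2).
Proof.
  intros x c Hx Hc. assert (HP := PI_RGT_0).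
  destruct (Rle_dec x PI) as [Hle|Hgt].
  - rewrite Rmin_right in Hc by lra. rewrite Rmax_left in Hc by lra.
    apply sin_incr_1; lra.
  - rewrite Rmin_left in Hc by lra. rewrite Rmax_right in Hc by lra.
    apply sin_decr_1; lra.
Qed.


Definition Psi2 (u U1 : R -> R) (Nh t : R) := U1 t * sin (t / 2) - u t / 2 * cos (t / 2) - cos (Nh * t) / (8 * Nh).

Lemma Psi2_deriv (u U1 U2 Dm : R -> R) (Nh : R) (HNh : 0 < Nh)
  (Hu : forall t, is_derive u t (U1 t)) (HU1 : forall t, is_derive U1 t (U2 t))
  (HODE : forall t, U2 t + u t / 4 = -(1/4) * (Dm t + 1/2))
  (HDir : forall t, sin (t / 2) * (2 * Dm t + 1) = sin (Nh * t)) : forall t, is_derive (Psi2 u U1 Nh) t 0.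
Proof.
  intro t. unfold Psi2. eapply is_derive_eq.
  - apply isd_minus. apply isd_minus.
    + apply isd_mult. apply HU1. auto_derive. auto. reflexivity.
    + apply isd_mult.
      * apply (is_derive_ext (fun t => / 2 * u t)). intro s; unfold Rdiv; apply Rmult_comm.
        apply is_derive_scal. apply Hu.
      * auto_derive. auto. reflexivity.
    + auto_derive. auto. reflexivity.
  - assert (E1 := HODE t). assert (E2 := HDir t).
    replace (t * / 2) with (t / 2) by reflexivity.
    replace (U2 t) with (-(1/4) * (Dm t + 1/2) - u t / 4) by lra.
    rewrite <- E2. match goal with |- ?a = ?b => change (@eq R a b) end. field. lra.
Qed.

Definition Psi1 (u U1 : R -> R) (Nh t : R) := U1 t * cos (t / 2) + u t / 2 * sin (t / 2)
   - cos (Nh * t) / (8 * Nh) * (cos (t / 2) / sin (t / 2)).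

Lemma Psi1_deriv (u U1 U2 Dm : R -> R) (Nh : R) (HNh : 0 < Nh)
  (Hu : forall t, is_derive u t (U1 t)) (HU1 : forall t, is_derive U1 t (U2 t))
  (HODE : forall t, U2 t + u t / 4 = -(1/4) * (Dm t + 1/2))
  (HDir : forall t, sin (t / 2) * (2 * Dm t + 1) = sin (Nh * t)) : forall t, sin (t / 2) <> 0 ->
  is_derive (Psi1 u U1 Nh) t (cos (Nh * t) / (16 * Nh * sin (t / 2) ^ 2)).
Proof.
  intros t Hs. unfold Psi1. eapply is_derive_eq.
  - apply isd_minus. apply isd_plus.
    + apply isd_mult. apply HU1. auto_derive. auto. reflexivity.
    + apply isd_mult.
      * apply (is_derive_ext (fun t => / 2 * u t)). intro s; unfold Rdiv; apply Rmult_comm.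
        apply is_derive_scal. apply Hu.
      * auto_derive. auto. reflexivity.
    + apply isd_mult. auto_derive. auto. reflexivity. apply cot_deriv. exact Hs.
  - assert (E1 := HODE t). assert (E2 := HDir t).
    replace (t * / 2) with (t / 2) by reflexivity.
    replace (U2 t) with (-(1/4) * (Dm t + 1/2) - u t / 4) by lra.
    rewrite <- E2. match goal with |- ?a = ?b => change (@eq R a b) end. field. lra.
Qed.

Lemma core_bound (u U1 U2 Dm : R -> R) (Nh : R) (HNh : 0 < Nh)
  (Hu : forall t, is_derive u t (U1 t)) (HU1 : forall t, is_derive U1 t (U2 t))
  (HODE : forall t, U2 t + u t / 4 = -(1/4) * (Dm t + 1/2))
  (HDir : forall t, sin (t / 2) * (2 * Dm t + 1) = sin (Nh * t))
  (HU1PI : U1 PI = 0) (HcPI : cos (Nh * PI) = 0) : forall x, 0 < x < 2 * PI ->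
  Rabs (u x) <= Rabs (u PI) + PI / (8 * sin (x / 2)) / Nh.
Proof.
  intros x Hx. assert (HP := PI_RGT_0).
  set (s := sin (x / 2)).
  assert (Hs : 0 < s) by (apply sin_gt_0; lra).
  assert (H2 : Psi2 u U1 Nh x = Psi2 u U1 Nh PI).
  { destruct (MVT_gen (Psi2 u U1 Nh) PI x (fun _ => 0)) as [c [_ E]].
    - intros t _. apply (Psi2_deriv u U1 U2 Dm Nh HNh Hu HU1 HODE HDir).
    - intros t _. apply (isd_cont _ _ _ (Psi2_deriv u U1 U2 Dm Nh HNh Hu HU1 HODE HDir t)).
    - lra. }
  assert (H2PI : Psi2 u U1 Nh PI = 0).
  { unfold Psi2. rewrite HU1PI, HcPI. replace (PI / 2) with (PI / 2) by reflexivity.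
    rewrite cos_PI2. field. lra. }
  assert (H1 : Rabs (Psi1 u U1 Nh x - Psi1 u U1 Nh PI) <= PI / (16 * Nh * s ^ 2)).
  { destruct (MVT_gen (Psi1 u U1 Nh) PI x (fun t => cos (Nh * t) / (16 * Nh * sin (t / 2) ^ 2))) as [c [Hc E]].
    - intros t Ht. apply (Psi1_deriv u U1 U2 Dm Nh HNh Hu HU1 HODE HDir).
      assert (Ht2 : Rmin PI x <= t <= Rmax PI x) by lra.
      assert (H := sin_half_ge x t Hx Ht2). fold s in H. lra.
    - intros t Ht. assert (H := sin_half_ge x t Hx Ht). fold s in H.
      assert (Hst : sin (t / 2) <> 0) by lra.
      apply (isd_cont _ _ _ (Psi1_deriv u U1 U2 Dm Nh HNh Hu HU1 HODE HDir t Hst)).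
    - rewrite E. assert (H := sin_half_ge x c Hx Hc). fold s in H.
      assert (Hsc : 0 < sin (c / 2)) by lra.
      rewrite Rabs_mult. unfold Rdiv. rewrite Rabs_mult, Rabs_inv.
      replace (c * / 2) with (c / 2) by reflexivity.
      rewrite (Rabs_right (16 * Nh * sin (c / 2) ^ 2)).
      2: { apply Rle_ge. apply Rmult_le_pos. lra. apply pow_le. lra. }
      assert (Hcos : Rabs (cos (Nh * c)) <= 1) by (apply Rabs_le; apply COS_bound).
      assert (Hxp : Rabs (x - PI) <= PI) by (apply Rabs_le; lra).
      assert (Hq : s ^ 2 <= sin (c / 2) ^ 2) by (apply pow_incr; lra).
      assert (0 < s ^ 2) by (apply pow_lt; lra).
      assert (HB : / (16 * Nh * sin (c / 2) ^ 2) <= / (16 * Nh * s ^ 2)).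
      { apply Rinv_le_contravar. apply Rmult_lt_0_compat; lra.
        apply Rmult_le_compat_l; lra. }
      assert (0 < / (16 * Nh * sin (c / 2) ^ 2)).
      { apply Rinv_0_lt_compat. apply Rmult_lt_0_compat. lra. apply pow_lt; lra. }
      apply Rle_trans with (1 * / (16 * Nh * s ^ 2) * PI).
      + apply Rmult_le_compat; try apply Rabs_pos.
        apply Rmult_le_pos. apply Rabs_pos. lra.
        apply Rmult_le_compat; try apply Rabs_pos; lra.
        exact Hxp.
      + right. field. lra. }
  assert (H1PI : Psi1 u U1 Nh PI = u PI / 2).
  { unfold Psi1. rewrite HU1PI, HcPI, cos_PI2, sin_PI2. field. lra. }
  assert (Eu : u x = 2 * s * Psi1 u U1 Nh x).
  { rewrite H2PI in H2. unfold Psi2, Psi1 in H2 |- *. fold s in H2 |- *.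
    assert (Hsc := sc1 (x / 2)). fold s in Hsc.
    set (c2 := cos (x / 2)) in H2, Hsc |- *. set (a := cos (Nh * x)) in H2 |- *.
    assert (E : U1 x * s = u x / 2 * c2 + a / (8 * Nh)) by lra.
    apply Rmult_eq_reg_l with s; [|lra].
    field_simplify; [|lra].
    replace (16 * s ^ 2 * U1 x * c2 * Nh) with (16 * s * c2 * Nh * (U1 x * s)) by ring.
    rewrite E. replace (s ^ 3) with (s * s ^ 2) by ring.
    replace (s ^ 2) with (1 - c2 ^ 2) by lra. field. lra. }
  rewrite Eu. rewrite H1PI in H1.
  assert (Hs1 : s <= 1) by (apply SIN_bound).
  assert (HP1 : Rabs (Psi1 u U1 Nh x) <= Rabs (u PI) / 2 + PI / (16 * Nh * s ^ 2)).
  { replace (Psi1 u U1 Nh x) with ((Psi1 u U1 Nh x - u PI / 2) + u PI / 2) by ring.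
    eapply Rle_trans. apply Rabs_triang. unfold Rdiv at 2. rewrite Rabs_mult.
    rewrite (Rabs_right (/ 2)) by lra. lra. }
  rewrite Rabs_mult, (Rabs_right (2 * s)) by lra.
  apply Rle_trans with (2 * s * (Rabs (u PI) / 2 + PI / (16 * Nh * s ^ 2))).
  - apply Rmult_le_compat_l; lra.
  - assert (0 <= Rabs (u PI)) by apply Rabs_pos.
    replace (2 * s * (Rabs (u PI) / 2 + PI / (16 * Nh * s ^ 2))) with
      (s * Rabs (u PI) + PI / (8 * s) / Nh) by (field; lra).
    nra.
Qed.



Lemma kkS : forall n, kk (S n) = kk n + 1.
Proof. intro n. unfold kk. rewrite (S_INR (S n)). reflexivity. Qed.

Lemma sin_kk_PI : forall n, sin (kk n * PI) = 0.
Proof.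
  induction n as [|n IH].
  - unfold kk. simpl. rewrite Rmult_1_l. apply sin_PI.
  - rewrite kkS, Rmult_plus_distr_r, Rmult_1_l, neg_sin, IH. ring.
Qed.

Lemma cos_kk_PI : forall n, cos (kk n * PI) = (-1) ^ (S n).
Proof.
  induction n as [|n IH].
  - unfold kk. simpl. rewrite Rmult_1_l, cos_PI. ring.
  - rewrite kkS, Rmult_plus_distr_r, Rmult_1_l, neg_cos, IH. simpl. ring.
Qed.

Lemma cos_Nh_PI : forall N, cos ((INR N + 3/2) * PI) = 0.
Proof.
  induction N as [|N IH].
  - simpl. replace ((0 + 3/2) * PI) with (PI / 2 + PI) by field.
    rewrite neg_cos, cos_PI2. ring.
  - rewrite S_INR. replace ((INR N + 1 + 3/2) * PI) with ((INR N + 3/2) * PI + PI) by ring.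
    rewrite neg_cos, IH. ring.
Qed.

Lemma sin_cos_prod : forall a b, 2 * sin a * cos b = sin (b + a) - sin (b - a).
Proof. intros a b. rewrite sin_plus, sin_minus. ring. Qed.

Lemma sum_n_plusR (a b : nat -> R) N : sum_n (fun k => a k + b k) N = sum_n a N + sum_n b N.
Proof.
  induction N as [|N IH].
  - rewrite !sum_O. reflexivity.
  - rewrite !sum_Sn, IH. change (sum_n a N + sum_n b N + (a (S N) + b (S N)) =
      sum_n a N + a (S N) + (sum_n b N + b (S N))). ring.
Qed.

Lemma dirichlet : forall N t,
  sin (t / 2) * (2 * sum_n (fun n => cos (kk n * t)) N + 1) = sin ((INR N + 3/2) * t).
Proof.
  intros N t. induction N as [|N IH].
  - rewrite sum_O. unfold kk. simpl. rewrite Rmult_1_l.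
    replace (sin (t / 2) * (2 * cos t + 1)) with (2 * sin (t / 2) * cos t + sin (t / 2)) by ring.
    rewrite sin_cos_prod. replace (t - t / 2) with (t / 2) by field.
    replace (t + t / 2) with ((0 + 3 / 2) * t) by field. ring.
  - rewrite sum_Sn.
    change (sin (t / 2) * (2 * (sum_n (fun n => cos (kk n * t)) N + cos (kk (S N) * t)) + 1)
      = sin ((INR (S N) + 3 / 2) * t)).
    replace (sin (t / 2) * (2 * (sum_n (fun n => cos (kk n * t)) N + cos (kk (S N) * t)) + 1))
      with (sin (t / 2) * (2 * sum_n (fun n => cos (kk n * t)) N + 1) + 2 * sin (t / 2) * cos (kk (S N) * t)) by ring.
    rewrite IH, sin_cos_prod. unfold kk. rewrite !S_INR.
    replace ((INR N + 1 + 1) * t - t / 2) with ((INR N + 3 / 2) * t) by field.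
    replace ((INR N + 1 + 1) * t + t / 2) with ((INR N + 1 + 3 / 2) * t) by field. ring.
Qed.


Definition uN N t := sum_n (cterm 0 t) N - (1/2 - PI/4 * sin (t/2)).
Definition U1N N t := sum_n (fun n => - kk n * sin (kk n * t) / ((2 * kk n - 1) * (2 * kk n + 1))) N
   + PI / 8 * cos (t / 2).
Definition U2N N t := sum_n (fun n => - kk n ^ 2 * cos (kk n * t) / ((2 * kk n - 1) * (2 * kk n + 1))) N
   - PI / 16 * sin (t / 2).
Definition DmN N t := sum_n (fun n => cos (kk n * t)) N.

Lemma den_pos2 : forall n, 0 < (2 * kk n - 1) * (2 * kk n + 1).
Proof. intro n. assert (H := kk_ge1 n). nra. Qed.

Lemma F0_deriv : forall t, is_derive (fun x => 1/2 - PI/4 * sin (x/2)) t (- (PI/8) * cos (t/2)).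
Proof. intro t. auto_derive. exact I. replace (t * / 2) with (t / 2) by reflexivity. field. Qed.

Lemma F0_deriv2 : forall t, is_derive (fun x => PI / 8 * cos (x / 2)) t (- (PI/16) * sin (t/2)).
Proof. intro t. auto_derive. exact I. replace (t * / 2) with (t / 2) by reflexivity. field. Qed.

Lemma uN_deriv : forall N t, is_derive (uN N) t (U1N N t).
Proof.
  intros N t. unfold uN, U1N. eapply is_derive_eq.
  - apply isd_minus.
    + apply (is_derive_sum_n (fun n t => cterm 0 t n)
        (fun n t => - kk n * sin (kk n * t) / ((2 * kk n - 1) * (2 * kk n + 1)))).
      intro n. unfold cterm. replace ((2 * kk n) ^ (2 * 0)) with 1 by reflexivity.
      assert (H1 := kk_ge1 n).
      assert (H := den_pos2 n). set (k := kk n) in *. clearbody k.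
      auto_derive. exact I. field. lra.
    + apply F0_deriv.
  - match goal with |- ?a = ?b => change (@eq R a b) end. field.
Qed.

Lemma U1N_deriv : forall N t, is_derive (U1N N) t (U2N N t).
Proof.
  intros N t. unfold U1N, U2N. eapply is_derive_eq.
  - apply isd_plus.
    + apply (is_derive_sum_n (fun n t => - kk n * sin (kk n * t) / ((2 * kk n - 1) * (2 * kk n + 1)))
        (fun n t => - kk n ^ 2 * cos (kk n * t) / ((2 * kk n - 1) * (2 * kk n + 1)))).
      intro n.
      assert (H1 := kk_ge1 n).
      assert (H := den_pos2 n). set (k := kk n) in *. clearbody k.
      auto_derive. exact I. field. lra.
    + apply F0_deriv2.
  - match goal with |- ?a = ?b => change (@eq R a b) end. field.
Qed.

Lemma ODE_N : forall N t, U2N N t + uN N t / 4 = -(1/4) * (DmN N t + 1/2).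
Proof.
  intros N t. unfold U2N, uN, DmN.
  assert (E : forall n, - kk n ^ 2 * cos (kk n * t) / ((2 * kk n - 1) * (2 * kk n + 1)) + cterm 0 t n / 4
     = -(1/4) * cos (kk n * t)).
  { intro n. unfold cterm. replace ((2 * kk n) ^ (2 * 0)) with 1 by reflexivity.
    assert (H1 := kk_ge1 n). field. lra. }
  assert (E2 : sum_n (fun n => - kk n ^ 2 * cos (kk n * t) / ((2 * kk n - 1) * (2 * kk n + 1))) N
     + sum_n (cterm 0 t) N / 4 = -(1/4) * sum_n (fun n => cos (kk n * t)) N).
  { transitivity (sum_n (fun n => - kk n ^ 2 * cos (kk n * t) / ((2 * kk n - 1) * (2 * kk n + 1))
        + / 4 * cterm 0 t n) N).
    - rewrite sum_n_plusR. f_equal. rewrite sum_n_scal. unfold Rdiv. apply Rmult_comm.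
    - rewrite <- sum_n_scal. apply sum_n_ext. intro n. rewrite <- E. unfold Rdiv. match goal with |- ?a = ?b => change (@eq R a b) end. ring. }
  lra.
Qed.

Lemma U1N_PI : forall N, U1N N PI = 0.
Proof.
  intro N. unfold U1N. rewrite (sum_n_ext _ (fun n => 0 * 0)).
  - rewrite sum_n_scal. rewrite cos_PI2. match goal with |- ?a = ?b => change (@eq R a b) end. ring.
  - intro n. rewrite sin_kk_PI. assert (H1 := kk_ge1 n). match goal with |- ?a = ?b => change (@eq R a b) end. field. lra.
Qed.

Lemma uN_bound : forall N x, 0 < x < 2 * PI ->
  Rabs (uN N x) <= Rabs (uN N PI) + PI / (8 * sin (x / 2)) / (INR N + 3/2).
Proof.
  intros N x Hx.
  apply (core_bound (uN N) (U1N N) (U2N N) (DmN N) (INR N + 3/2)).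
  - assert (H := pos_INR N). lra.
  - apply uN_deriv.
  - apply U1N_deriv.
  - apply ODE_N.
  - intro t. unfold DmN. rewrite dirichlet. f_equal.
  - apply U1N_PI.
  - apply cos_Nh_PI.
  - exact Hx.
Qed.


Lemma leibniz : is_lim_seq (fun N => sum_f_R0 (tg_alt PI_tg) N) (PI / 4).
Proof.
  apply is_lim_seq_Reals. rewrite <- Alt_PI_eq. unfold Alt_PI.
  destruct exist_PI as [l Hl]. replace (4 * l / 4) with l by field. exact Hl.
Qed.

Lemma cterm0_PI : forall n, cterm 0 PI n = (-1) ^ (S n) / ((2 * INR n + 1) * (2 * INR n + 3)).
Proof.
  intro n. unfold cterm. rewrite cos_kk_PI. replace ((2 * kk n) ^ (2 * 0)) with 1 by reflexivity.
  unfold kk. rewrite S_INR. f_equal. ring.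
Qed.

Lemma tg_eq : forall n, tg_alt PI_tg n = (-1) ^ n / (2 * INR n + 1).
Proof.
  intro n. unfold tg_alt, PI_tg. rewrite plus_INR, mult_INR. simpl (INR 2). simpl (INR 1). reflexivity.
Qed.

Lemma sum_cterm0_PI : forall N,
  sum_n (cterm 0 PI) N = 1/2 * (1 - sum_f_R0 (tg_alt PI_tg) N - sum_f_R0 (tg_alt PI_tg) (S N)).
Proof.
  induction N as [|N IH].
  - rewrite sum_O, cterm0_PI. simpl. rewrite !tg_eq. simpl. field.
  - rewrite sum_Sn, IH. rewrite (tech5 _ (S N)). rewrite (tech5 _ N).
    rewrite cterm0_PI, !tg_eq.
    change (1 / 2 * (1 - sum_f_R0 (tg_alt PI_tg) N - (sum_f_R0 (tg_alt PI_tg) N + (-1) ^ S N / (2 * INR (S N) + 1))) +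
      (-1) ^ S (S N) / ((2 * INR (S N) + 1) * (2 * INR (S N) + 3)) =
      1 / 2 * (1 - (sum_f_R0 (tg_alt PI_tg) N + (-1) ^ S N / (2 * INR (S N) + 1)) -
      (sum_f_R0 (tg_alt PI_tg) N + (-1) ^ S N / (2 * INR (S N) + 1) + (-1) ^ S (S N) / (2 * INR (S (S N)) + 1)))).
    rewrite !S_INR. assert (H := pos_INR N).
    replace ((-1) ^ S (S N)) with (- (-1) ^ S N) by (simpl; ring).
    field. lra.
Qed.

Lemma uN_PI_lim : is_lim_seq (fun N => uN N PI) 0.
Proof.
  unfold uN. eapply is_lim_seq_ext.
  { intro N. symmetry. rewrite sum_cterm0_PI. reflexivity. }
  replace (Finite 0) with (Finite (1/2 * (1 - PI/4 - PI/4) - (1/2 - PI/4 * sin (PI/2)))).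
  2: { rewrite sin_PI2. f_equal. field. }
  apply is_lim_seq_minus'. 2: apply is_lim_seq_const.
  apply is_lim_seq_scal_l with (lu := Finite (1 - PI/4 - PI/4)).
  apply is_lim_seq_minus'. apply is_lim_seq_minus'. apply is_lim_seq_const. apply leibniz.
  apply (is_lim_seq_incr_1 (fun N => sum_f_R0 (tg_alt PI_tg) N)). apply leibniz.
Qed.


Lemma lim_inv_Nh : is_lim_seq (fun N => / (INR N + 3/2)) 0.
Proof.
  assert (H : is_lim_seq (fun N => INR N + 3/2) p_infty).
  { eapply is_lim_seq_le_p_loc. 2: exact is_lim_seq_INR.
    exists O. intros n _. lra. }
  replace (Finite 0) with (Rbar_inv p_infty) by reflexivity.
  apply is_lim_seq_inv. exact H. discriminate.
Qed.

Lemma base_case : forall x, 0 < x < 2 * PI -> is_series (cterm 0 x) (Fp 0 x).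
Proof.
  intros x Hx.
  set (C := PI / (8 * sin (x / 2))).
  assert (Hu : is_lim_seq (fun N => uN N x) 0).
  { assert (HB : is_lim_seq (fun N => Rabs (uN N PI) + C * / (INR N + 3/2)) 0).
    { replace (Finite 0) with (Finite (0 + C * 0)) by (f_equal; ring).
      apply is_lim_seq_plus'.
      - assert (HL := is_lim_seq_abs _ 0 uN_PI_lim). simpl in HL. rewrite Rabs_R0 in HL. exact HL.
      - apply is_lim_seq_mult'. apply is_lim_seq_const. apply lim_inv_Nh. }
    apply is_lim_seq_le_le with (fun N => - (Rabs (uN N PI) + C * / (INR N + 3/2)))
      (fun N => Rabs (uN N PI) + C * / (INR N + 3/2)).
    - intro N. assert (H := uN_bound N x Hx). fold C in H. unfold Rdiv in H.
      assert (H1 := Rle_abs (uN N x)). assert (H2 := Rle_abs (- uN N x)). rewrite Rabs_Ropp in H2. lra.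
    - replace (Finite 0) with (Rbar_opp 0) by (simpl; f_equal; ring).
      apply -> is_lim_seq_opp. exact HB.
    - exact HB. }
  apply (proj1 (iser_lim _ _)).
  eapply is_lim_seq_ext with (fun N => uN N x + (1/2 - PI/4 * sin (x/2))).
  { intro N. unfold uN. ring. }
  replace (Fp 0 x) with (0 + (1/2 - PI/4 * sin (x/2))).
  - apply is_lim_seq_plus'. exact Hu. apply is_lim_seq_const.
  - unfold Fp. rewrite sum_n_m_zero by lia. change (0 + (1 / 2 - PI / 4 * sin (x / 2)) = 1 / 2 - PI / 4 * sin (x / 2) - 1 / 2 * 0). ring.
Qed.


Lemma all_C : forall p x, 0 < x < 2 * PI -> is_series (cterm p x) (Fp p x).
Proof.
  induction p as [|p IH].
  - apply base_case.
  - apply C_step. apply S_step. exact IH.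
Qed.

Theorem corollary7 (p : nat) (x : R) (hx0 : 0 < x) (hx1 : x < 2 * PI) :
  is_series
    (fun n : nat => let k := INR (S n) in
       cos (k * x) / ((2 * k - 1) * (2 * k) ^ (2 * p) * (2 * k + 1)))
    (1 / 2 - PI / 4 * sin (x / 2)
     - 1 / 2 * sum_n_m (fun j : nat =>
          (-1) ^ (j + 1) * PI ^ (2 * j) / INR (fact (2 * j))
          * Bernoulli (2 * j) (x / (2 * PI))) 1 p)
  /\
  is_series
    (fun n : nat => let k := INR (S n) in
       sin (k * x) / ((2 * k - 1) * (2 * k) ^ (2 * p + 1) * (2 * k + 1)))
    (PI / 4 * cos (x / 2) - 1 / 4 * (PI - x)
     - 1 / 2 * sum_n_m (fun j : nat =>
          (-1) ^ (j + 1) * PI ^ (2 * j + 1) / INR (fact (2 * j + 1))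
          * Bernoulli (2 * j + 1) (x / (2 * PI))) 1 p).
Proof.
  split.
  - exact (all_C p x (conj hx0 hx1)).
  - exact (S_step p (all_C p) x (conj hx0 hx1)).
Qed.
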